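(* Let $d\ge2$ be an integer and, for real $b,c$, let $$\rho_{bc}=a\sum_{i=0}^{d-1}|ii\rangle\langle ii|+b\sum_{i<j}|\psi^-_{ij}\rangle\langle\psi^-_{ij}|+c\sum_{i<j}|\psi^+_{ij}\rangle\langle\psi^+_{ij}|,\quad a=\frac1d\Big(1-(b+c)\frac{d(d-1)}2\Big).$$ If $(b,c)$ lies in the convex hull of the four points $B=\big(\tfrac{1}{d(d-1)},0\big)$, $C=\big(\tfrac{4}{d(3d-2)},0\big)$, $G=\big(\tfrac{3}{d(2d-1)},\tfrac{1}{d(2d-1)}\big)$, $K=\big(\tfrac1{d(d-1)},\tfrac1{d(d-1)}\big)$ in the $(b,c)$-plane, then $\rho_{bc}$ is pseudo one-copy undistillable, i.e. $\langle\phi|\rho_{bc}^{PT}|\phi\rangle\ge0$ for all $|\phi\rangle\in\mathbb{C}^d\otimes\mathbb{C}^d$ of Schmidt rank two.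
   Context: $|\psi^{\pm}_{ij}\rangle=\frac1{\sqrt2}(|ij\rangle\pm|ji\rangle)$, sums over $0\le i<j\le d-1$. $X^{PT}$ is the partial transpose on the second factor, $\langle ij|X^{PT}|kl\rangle=\langle il|X|kj\rangle$. *)

(* Defs.v *)
From HB Require Import structures.
From mathcomp Require Import all_boot all_order all_algebra.
From mathcomp Require Import reals.
From mathcomp Require Export complex.
Set Implicit Arguments. Unset Strict Implicit. Unset Printing Implicit Defensive.
Import Order.TTheory GRing.Theory Num.Theory.
Local Open Scope ring_scope.

Section Defs.
Variable R : realType.
Local Notation C := R[i].
Variable d : nat.

(* A vector |phi> in C^d (x) C^d, given by its coefficients phi i j = <ij|phi>. *)
Definition bivec := 'I_d -> 'I_d -> C.
(* An operator X on C^d (x) C^d, given by its entries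
   op X i j k l = <ij|X|kl>. *)
Definition biop := 'I_d -> 'I_d -> 'I_d -> 'I_d -> C.

Definition ket (i j : 'I_d) : bivec := fun k l => ((k == i) && (l == j))%:R.

(* |psi^{+/-}_ij> = (|ij> +/- |ji>)/sqrt 2 ; s = 1 for +, s = -1 for - *)
Definition psi (s : C) (i j : 'I_d) : bivec :=
  fun k l => (ket i j k l + s * ket j i k l) / ((Num.sqrt (2 : R))%:C)%C.

Definition outer (v w : bivec) : biop :=
  fun i j k l => v i j * conjc (w k l).

Definition opD (X Y : biop) : biop := fun i j k l => X i j k l + Y i j k l.
Definition opZ (s : C) (X : biop) : biop := fun i j k l => s * X i j k l.
Definition opsum (I : finType) (P : pred I) (F : I -> biop) : biop :=
  fun i j k l => \sum_(x | P x) F x i j k l.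

Definition a_coef (b c : R) : R :=
  d%:R^-1 * (1 - (b + c) * (d%:R * (d%:R - 1) / 2)).

Definition rho_bc (b c : R) : biop :=
  opD (opZ ((a_coef b c)%:C)%C
         (opsum (fun _ : 'I_d => true) (fun i => outer (ket i i) (ket i i))))
   (opD (opZ (b%:C)%C (opsum (fun p : 'I_d * 'I_d => (p.1 < p.2)%N)
                     (fun p => outer (psi (-1) p.1 p.2) (psi (-1) p.1 p.2))))
        (opZ (c%:C)%C (opsum (fun p : 'I_d * 'I_d => (p.1 < p.2)%N)
                     (fun p => outer (psi 1 p.1 p.2) (psi 1 p.1 p.2))))).

(* partial transpose on the second factor: <ij|X^PT|kl> = <il|X|kj> *)
Definition PT (X : biop) : biop := fun i j k l => X i l k j.

Definition expect (X : biop) (phi : bivec) : C :=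
  \sum_(i < d) \sum_(j < d) \sum_(k < d) \sum_(l < d)
     conjc (phi i j) * X i j k l * phi k l.

(* Schmidt rank of |phi> = rank of its d x d coefficient matrix *)
Definition schmidt_rank (phi : bivec) : nat := \rank (\matrix_(i, j) phi i j).

Definition in_hull_BCGK (b c : R) : Prop :=
  let dd := (d%:R : R) in
  let B := (1 / (dd * (dd - 1)), 0) in
  let Cp := (4 / (dd * (3 * dd - 2)), 0) in
  let G := (3 / (dd * (2 * dd - 1)), 1 / (dd * (2 * dd - 1))) in
  let K := (1 / (dd * (dd - 1)), 1 / (dd * (dd - 1))) in
  exists l1 l2 l3 l4 : R,
    [/\ 0 <= l1, 0 <= l2, 0 <= l3 & 0 <= l4] /\ l1 + l2 + l3 + l4 = 1 /\
    b = l1 * B.1 + l2 * Cp.1 + l3 * G.1 + l4 * K.1 /\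
    c = l1 * B.2 + l2 * Cp.2 + l3 * G.2 + l4 * K.2.

End Defs.

Arguments rho_bc {R} d b c.
Arguments in_hull_BCGK {R} d b c.

(* Main.v *)
Require Import Defs.
From HB Require Import structures.
From mathcomp Require Import all_boot all_order all_algebra.
From mathcomp Require Import reals complex.
From mathcomp Require Import ring lra.
Import Order.TTheory GRing.Theory Num.Theory.
Local Open Scope ring_scope.

Section Main.
Variable R : realType.
Local Notation C := R[i].
Variable d : nat.
Variable phi : bivec R d.

Definition ee (X : biop R d) := expect (PT X) phi.

Lemma ee_ext (X Y : biop R d) :
  (forall i j k l, X i j k l = Y i j k l) -> ee X = ee Y.
Proof.
move=> H; rewrite /ee /expect /PT.
apply: eq_bigr => i _; apply: eq_bigr => j _; apply: eq_bigr => k _.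
by apply: eq_bigr => l _; rewrite H.
Qed.

Lemma eeD X Y : ee (opD X Y) = ee X + ee Y.
Proof.
rewrite /ee /expect /PT /opD -big_split; apply: eq_bigr => i _.
rewrite -big_split; apply: eq_bigr => j _.
rewrite -big_split; apply: eq_bigr => k _.
rewrite -big_split; apply: eq_bigr => l _.
by rewrite mulrDr mulrDl.
Qed.

Lemma eeZ s X : ee (opZ s X) = s * ee X.
Proof.
rewrite /ee /expect /PT /opZ mulr_sumr; apply: eq_bigr => i _.
rewrite mulr_sumr; apply: eq_bigr => j _.
rewrite mulr_sumr; apply: eq_bigr => k _.
rewrite mulr_sumr; apply: eq_bigr => l _.
by rewrite !mulrA [s * _]mulrC.
Qed.

Lemma eesum (I : finType) (P : pred I) (F : I -> biop R d) :
  ee (opsum P F) = \sum_(x | P x) ee (F x).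
Proof.
rewrite /ee /expect /PT /opsum; symmetry.
rewrite exchange_big /=; apply: eq_bigr => i _.
rewrite exchange_big /=; apply: eq_bigr => j _.
rewrite exchange_big /=; apply: eq_bigr => k _.
rewrite exchange_big /=; apply: eq_bigr => l _.
by rewrite mulr_sumr mulr_suml.
Qed.

Lemma sum_only (x : 'I_d) (F : 'I_d -> C) :
  (forall y, y != x -> F y = 0) -> \sum_y F y = F x.
Proof.
move=> H; rewrite (bigD1 x) //= big1 ?addr0 // => y /H.
Qed.

Lemma ee_ket p q r s :
  ee (outer (ket R p q) (ket R r s)) = conjc (phi p s) * phi r q.
Proof.
rewrite (@ee_ext _ (fun i j k l => ((i == p) && (j == q))%:R * ((k == r) && (l == s))%:R)); last first.
  by move=> i j k l; rewrite /outer /ket conjc_nat.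
rewrite /ee /expect /PT.
rewrite (sum_only p); last first.
  move=> i /negPf Hi; rewrite big1 // => j _; rewrite big1 // => k _.
  by rewrite big1 // => l _; rewrite Hi /= !(mul0r, mulr0).
rewrite (sum_only s); last first.
  move=> j /negPf Hj; rewrite big1 // => k _.
  by rewrite big1 // => l _; rewrite Hj andbF /= !(mul0r, mulr0).
rewrite (sum_only r); last first.
  move=> k /negPf Hk.
  by rewrite big1 // => l _; rewrite Hk /= !(mul0r, mulr0).
rewrite (sum_only q); last first.
  move=> l /negPf Hl.
  by rewrite Hl andbF /= !(mul0r, mulr0).
by rewrite !eqxx /= !mulr1.
Qed.

Lemma sqrt2C : ((Num.sqrt (2:R))%:C)%C^-1 * conjc (((Num.sqrt (2:R))%:C)%C^-1) = (2^-1 : C).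
Proof.
rewrite conjc_inv conjc_real -invfM -rmorphM /= -expr2 sqr_sqrtr ?ler0n //.
by rewrite rmorph_nat.
Qed.

Lemma ee_psi (s : C) p q :
  ee (outer (psi s p q) (psi s p q)) =
  2^-1 * (conjc (phi p q) * phi p q + conjc s * (conjc (phi p p) * phi q q)
          + s * (conjc (phi q q) * phi p p) + s * conjc s * (conjc (phi q p) * phi q p)).
Proof.
rewrite (@ee_ext _ (opZ (2^-1) (opD (outer (ket R p q) (ket R p q))
   (opD (opZ (conjc s) (outer (ket R p q) (ket R q p)))
   (opD (opZ s (outer (ket R q p) (ket R p q)))
        (opZ (s * conjc s) (outer (ket R q p) (ket R q p)))))))); last first.
  move=> i j k l; rewrite /outer /psi /opZ /opD -sqrt2C.
  rewrite !rmorphM /= !rmorphD /= !rmorphM /=.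
  set u := ((Num.sqrt (2:R))%:C)%C^-1.
  ring.
by rewrite eeZ !eeD !eeZ !ee_ket !addrA.
Qed.

Lemma pair_sum (f : 'I_d -> 'I_d -> C) :
  \sum_(p : 'I_d * 'I_d | (p.1 < p.2)%N) (f p.1 p.2 + f p.2 p.1) =
  \sum_i \sum_j f i j - \sum_i f i i.
Proof.
have E : \sum_i \sum_j f i j =
   \sum_(p : 'I_d * 'I_d | (p.1 < p.2)%N) f p.1 p.2 +
   \sum_(p : 'I_d * 'I_d | (p.1 < p.2)%N) f p.2 p.1 + \sum_i f i i.
  rewrite pair_big /= (bigID (fun p : 'I_d * 'I_d => (p.1 < p.2)%N)) /=.
  rewrite -addrA; congr (_ + _).
  rewrite (bigID (fun p : 'I_d * 'I_d => (p.2 < p.1)%N)) /=; congr (_ + _).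
    rewrite (eq_bigl (fun p : 'I_d * 'I_d => (p.2 < p.1)%N)); last first.
      by move=> [x y] /=; case: (ltngtP x y).
    rewrite (reindex_inj (h := fun p : 'I_d * 'I_d => (p.2, p.1))) //=.
    by move=> [x y] [x' y'] [-> ->].
  rewrite (eq_bigl (fun p : 'I_d * 'I_d => p.1 == p.2)); last first.
    by move=> [x y] /=; rewrite -!leqNgt andbC -eqn_leq.
  rewrite -(pair_big_dep xpredT (fun i j => i == j)) /=.
  by apply: eq_bigr => i _; rewrite (big_pred1 i) // => j; rewrite /= eq_sym.
by rewrite E big_split /= addrK.
Qed.

Definition Dd := \sum_i conjc (phi i i) * phi i i.
Definition Ff := \sum_i \sum_j conjc (phi i j) * phi i j.
Definition Tt := \sum_i \sum_j conjc (phi i i) * phi j j.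

Lemma ee_rho b c :
  ee (rho_bc d b c) = ((a_coef d b c)%:C)%C * Dd
    + (b%:C)%C * (2^-1 * ((Ff - Dd) - (Tt - Dd)))
    + (c%:C)%C * (2^-1 * ((Ff - Dd) + (Tt - Dd))).
Proof.
rewrite /rho_bc !eeD !eeZ !eesum -addrA.
congr (_ * _ + (_ + _)).
- by apply: eq_bigr => i _; rewrite ee_ket.
- congr (_ * _).
  under eq_bigr do rewrite ee_psi.
  rewrite (eq_bigr (fun p : 'I_d * 'I_d => 2^-1 *
     ((conjc (phi p.1 p.2) * phi p.1 p.2 + conjc (phi p.2 p.1) * phi p.2 p.1)
    - (conjc (phi p.1 p.1) * phi p.2 p.2 + conjc (phi p.2 p.2) * phi p.1 p.1)))); last first.
    by move=> p _; rewrite rmorphN1; ring.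
  by rewrite -mulr_sumr sumrB (pair_sum (fun i j => conjc (phi i j) * phi i j)) (pair_sum (fun i j => conjc (phi i i) * phi j j)).
- congr (_ * _).
  under eq_bigr do rewrite ee_psi.
  rewrite (eq_bigr (fun p : 'I_d * 'I_d => 2^-1 *
     ((conjc (phi p.1 p.2) * phi p.1 p.2 + conjc (phi p.2 p.1) * phi p.2 p.1)
    + (conjc (phi p.1 p.1) * phi p.2 p.2 + conjc (phi p.2 p.2) * phi p.1 p.1)))); last first.
    by move=> p _; rewrite rmorph1; ring.
  by rewrite -mulr_sumr big_split /= (pair_sum (fun i j => conjc (phi i j) * phi i j)) (pair_sum (fun i j => conjc (phi i i) * phi j j)).
Qed.

End Main.
Section LA.
Context {C : numClosedFieldType}.

Lemma cs_sum {m} (x y : 'I_m -> C) :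
  (\sum_i x i * y i)^* * (\sum_i x i * y i) <=
  (\sum_i (x i)^* * x i) * (\sum_i (y i)^* * y i).
Proof.
pose u : 'rV[C]_m := \row_i x i.
pose v : 'rV[C]_m := \row_i (y i)^*.
have H : `|dotmx u v| ^+ 2 <= dotmx u u * dotmx v v.
  exact: (leif_le (CauchySchwarz (@dotmx C m) u v)).
move: H; rewrite !dotmxE !mxE normCK mulrC.
have -> : \sum_j u 0 j * (v ^t*)%sesqui j 0 = \sum_i x i * y i.
  by apply: eq_bigr => i _; rewrite !mxE conjCK.
have -> : \sum_j u 0 j * (u ^t*)%sesqui j 0 = \sum_i (x i)^* * x i.
  by apply: eq_bigr => i _; rewrite !mxE mulrC.
have -> : \sum_j v 0 j * (v ^t*)%sesqui j 0 = \sum_i (y i)^* * y i.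
  by apply: eq_bigr => i _; rewrite !mxE conjCK.
by [].
Qed.


Lemma tr_fact n r (M : 'M[C]_n) (X : 'M[C]_(n, r)) (S : 'M[C]_(r, n)) :
  X *m S = M -> S *m (S ^t*)%sesqui = 1%:M ->
  (\sum_i M i i)^* * (\sum_i M i i) <=
  r%:R * \sum_i \sum_j (M i j)^* * M i j.
Proof.
move=> HM SS.
pose z k := \sum_i X i k * S k i.
have trE : \sum_i M i i = \sum_k z k.
  rewrite /z exchange_big /=; apply: eq_bigr => i _.
  by rewrite -HM mxE.
have nE : \sum_i \sum_j (M i j)^* * M i j = \sum_k \sum_i (X i k)^* * X i k.
  have E1 : M *m (M ^t*)%sesqui = X *m (X ^t*)%sesqui.
    by rewrite -HM trmx_mul map_mxM mulmxA -(mulmxA X) SS mulmx1.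
  have := congr1 (@mxtrace _ _) E1; rewrite /mxtrace.
  under eq_bigr do rewrite !mxE.
  under [in X in _ = X -> _]eq_bigr do rewrite !mxE.
  move=> HH.
  transitivity (\sum_i \sum_j M i j * (M ^t*)%sesqui j i).
    by apply: eq_bigr => i _; apply: eq_bigr => j _; rewrite !mxE mulrC.
  rewrite HH exchange_big /=; apply: eq_bigr => k _.
  by apply: eq_bigr => i _; rewrite !mxE mulrC.
rewrite trE nE.
apply: le_trans (_ : (r%:R * \sum_k (z k)^* * z k) <= _).
  have := cs_sum (fun _ : 'I_r => 1) z.
  under eq_bigr do rewrite mul1r.
  rewrite sumr_const card_ord.
  by rewrite conjC1 mul1r.
rewrite ler_wpM2l ?ler0n //; apply: ler_sum => k _.
have := cs_sum (fun i => X i k) (fun i => S k i).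
have -> : \sum_i (S k i)^* * S k i = 1.
  have := congr1 (fun A : 'M[C]_r => A k k) SS; rewrite !mxE eqxx /= => H; rewrite -[X in _ = X]H.
  by apply: eq_bigr => i _; rewrite !mxE mulrC.
by rewrite mulr1.
Qed.

Lemma tr_rank n (M : 'M[C]_n) :
  (\sum_i M i i)^* * (\sum_i M i i) <=
  (\rank M)%:R * \sum_i \sum_j (M i j)^* * M i j.
Proof.
pose S := schmidt (row_base M).
have Su : S \is unitarymx by apply: schmidt_unitarymx; exact: rank_leq_col.
have Hsub : (M <= S)%MS.
  by apply: submx_trans (schmidt_sub _); rewrite eq_row_base.
apply: (@tr_fact n _ M (M *m pinvmx S) S).
  by rewrite mulmxKpV.
by apply/unitarymxP.
Qed.

End LA.
Section Fin.
Variable R : realType.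
Local Notation C := R[i].

Lemma combine (A P Q x1 x2 x3 n : R) (D F T : C) :
  A = - x1 + n * x2 -> P = x1 + 2 * x3 -> Q = - x2 - x3 ->
  (A%:C)%C * D + (P%:C)%C * F + (Q%:C)%C * T =
  (x1%:C)%C * (F - D) + (x2%:C)%C * ((n%:C)%C * D - T) + (x3%:C)%C * (2 * F - T).
Proof.
move=> -> -> ->; rewrite !(rmorphD, rmorphN, rmorphM, rmorphB) /= ?rmorph_nat.
ring.
Qed.

Lemma E_form d (phi : bivec R d) (b c : R) :
  ee R d phi (rho_bc d b c) =
  ((a_coef d b c - c)%:C)%C * Dd R d phi + (((b + c) / 2)%:C)%C * Ff R d phi
    + (((c - b) / 2)%:C)%C * Tt R d phi.
Proof.
rewrite ee_rho; generalize (a_coef d b c) => a.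
have h2 : ((2 : R)^-1)%:C%C = 2^-1 :> C by rewrite fmorphV /= rmorph_nat.
rewrite !(rmorphB, rmorphM, rmorphD) /= h2.
by field.
Qed.

Lemma Tt_E d (phi : bivec R d) :
  Tt R d phi = (\sum_i phi i i)^* * (\sum_i phi i i).
Proof.
rewrite /Tt rmorph_sum mulr_suml; apply: eq_bigr => i _.
by rewrite mulr_sumr.
Qed.

Lemma ineq1 d (phi : bivec R d) : Dd R d phi <= Ff R d phi.
Proof.
rewrite /Dd /Ff -subr_ge0 -sumrB sumr_ge0 // => i _.
rewrite (bigD1 i) //= addrC addrK sumr_ge0 // => j _.
by rewrite mulrC; apply: mul_conjC_ge0.
Qed.

Lemma ineq2 d (phi : bivec R d) : Tt R d phi <= d%:R * Dd R d phi.
Proof.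
rewrite Tt_E /Dd.
have := cs_sum (fun _ : 'I_d => 1) (fun i => phi i i).
under eq_bigr do rewrite mul1r.
have -> : \sum_(i < d) (1 : C)^* * 1 = d%:R.
  by rewrite (eq_bigr (fun _ => 1)) ?sumr_const ?card_ord // => i _; rewrite conjC1 mul1r.
by [].
Qed.

Lemma ineq3 d (phi : bivec R d) :
  Tt R d phi <= (schmidt_rank phi)%:R * Ff R d phi.
Proof.
rewrite Tt_E /Ff /schmidt_rank.
have := @tr_rank C d (\matrix_(i, j) phi i j).
under eq_bigr do rewrite mxE.
under [X in _ <= _ * X -> _]eq_bigr do under eq_bigr do rewrite mxE.
by [].
Qed.

End Fin.

Theorem proposition1 (R : realType) (d : nat) (b c : R) :
  (2 <= d)%N -> in_hull_BCGK d b c ->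
  forall phi : bivec R d, schmidt_rank phi = 2%N ->
  0 <= expect (PT (rho_bc d b c)) phi.
Proof.
move=> hd [l1 [l2 [l3 [l4 [[h1 h2 h3 h4] [hs [hb hc]]]]]]] phi hr.
change (0 <= ee R d phi (rho_bc d b c)).
rewrite E_form.
have hn : (2 : R) <= d%:R by rewrite (ler_nat R 2 d).
move: hb hc; rewrite /=; set n : R := d%:R => hb hc.
have hl1 : l1 = 1 - l2 - l3 - l4 by lra.
pose x1 := l1 / (2 * n * (n - 1)) + l4 / (n * (n - 1)).
pose x2 := l1 / (2 * n * (n - 1)) + l2 / (n * (3 * n - 2)).
pose x3 := l2 / (n * (3 * n - 2)) + l3 / (n * (2 * n - 1)).
have n0 : n != 0 by apply/eqP => h; lra.
have n1 : n - 1 != 0 by apply/eqP => h; lra.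
have n2 : 3 * n - 2 != 0 by apply/eqP => h; lra.
have n3 : 2 * n - 1 != 0 by apply/eqP => h; lra.
rewrite (@combine R _ _ _ x1 x2 x3 n); first last.
- rewrite /x2 /x3 hb hc hl1; field; rewrite ?n0 ?n1 ?n2 ?n3 //.
- rewrite /x1 /x3 hb hc hl1; field; rewrite ?n0 ?n1 ?n2 ?n3 //.
- rewrite /x1 /x2 /a_coef -/n hb hc hl1; field; rewrite ?n0 ?n1 ?n2 ?n3 //.
have q1 : 0 < n * (n - 1) by apply: mulr_gt0; lra.
have q2 : 0 < 2 * n * (n - 1) by rewrite -mulrA; apply: mulr_gt0; lra.
have q3 : 0 < n * (3 * n - 2) by apply: mulr_gt0; lra.
have q4 : 0 < n * (2 * n - 1) by apply: mulr_gt0; lra.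
have X1 : 0 <= x1 by apply: addr_ge0; apply: divr_ge0 => //; apply: ltW.
have X2 : 0 <= x2 by apply: addr_ge0; apply: divr_ge0 => //; apply: ltW.
have X3 : 0 <= x3 by apply: addr_ge0; apply: divr_ge0 => //; apply: ltW.
apply: addr_ge0; [apply: addr_ge0|]; apply: mulr_ge0; rewrite ?ler0c // subr_ge0.
- exact: ineq1.
- by rewrite /n rmorph_nat; apply: ineq2.
- by have := @ineq3 R d phi; rewrite hr.
Qed.
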